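(* Let $(k,|\cdot|)$ be a complete non-archimedean valued field with $|k^\times| \neq \{1\}$, and let $p$ be a prime number with $|p|=1$. Let $r:=(r_1,\ldots,r_n)$ be a tuple of positive real numbers and $f \in k\{r^{-1}T\}=k\{r_1^{-1}T_1,\ldots,r_n^{-1}T_n\}$. Then for every $a \in \bar{k}$ with $|a|_{\bar{k}} > \|f\|_{k\{r^{-1}T\}}$, the element $f + a \in k\{r^{-1}T\} \otimes_k \bar{k}$ admits a compatible system of $p$-power roots.
   Context: $k\{r^{-1}T\}$ is the Banach $k$-algebra of power series $\sum_{\nu\in\mathbb{Z}_{\ge0}^n} a_\nu T^\nu$ with $a_\nu \in k$ and $|a_\nu| r^\nu \to 0$, normed by $\|\sum a_\nu T^\nu\| = \max_\nu |a_\nu| r^\nu$. $\bar{k}$ is an algebraic closure of $k$ with the unique extension $|\cdot|_{\bar k}$ of the absolute value. A compatible system of $p$-power roots of an element $g$ of a ring $R$ is a sequence $\{g^{1/p^e}\}_{e\ge0}$ in $R$ with $g^{1/p^0}=g$ and $(g^{1/p^{e+1}})^p = g^{1/p^e}$ for all $e$. *)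

(* Defs.v *)
From HB Require Import structures.
From mathcomp Require Import all_boot all_order all_algebra.
From mathcomp Require Import boolp classical_sets reals.
Set Implicit Arguments. Unset Strict Implicit. Unset Printing Implicit Defensive.
Import Order.TTheory GRing.Theory Num.Theory.
Local Open Scope ring_scope.
Local Open Scope classical_set_scope.

Definition nonarch_abs (R : realType) (K : fieldType) (v : K -> R) : Prop :=
  [/\ forall x, 0 <= v x,
      forall x, v x = 0 <-> x = 0,
      forall x y, v (x * y) = v x * v y
    & forall x y, v (x + y) <= Num.max (v x) (v y)].

Definition complete_abs (R : realType) (K : fieldType) (v : K -> R) : Prop :=
  forall u : nat -> K,
    (forall eps : R, 0 < eps -> exists N, forall m n, (N <= m)%N -> (N <= n)%N ->
        v (u m - u n) < eps) ->
    exists l : K, forall eps : R, 0 < eps -> exists N, forall m, (N <= m)%N ->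
        v (u m - l) < eps.

Definition nontrivial_abs (R : realType) (K : fieldType) (v : K -> R) : Prop :=
  exists x : K, x != 0 /\ v x != 1.

Definition multi_index (n : nat) := {ffun 'I_n -> nat}.
Definition pseries (K : Type) (n : nat) := multi_index n -> K.

Definition mi_deg n (nu : multi_index n) : nat := (\sum_(i < n) nu i)%N.
Definition mi_zero n : multi_index n := [ffun => 0%N].

Definition rpow (R : realType) n (r : 'I_n -> R) (nu : multi_index n) : R :=
  \prod_(i < n) r i ^+ nu i.

(* f lies in k{r^{-1}T}: |a_nu| r^nu -> 0 (along the cofinite filter on multi-indices). *)
Definition in_tate (R : realType) (K : fieldType) (v : K -> R) n (r : 'I_n -> R)
    (f : pseries K n) : Prop :=
  forall eps : R, 0 < eps -> exists N : nat, forall nu : multi_index n,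
    (N < mi_deg nu)%N -> v (f nu) * rpow r nu < eps.

(* Gauss norm ||f|| = max_nu |a_nu| r^nu (written as the supremum, which is attained). *)
Definition tate_norm (R : realType) (K : fieldType) (v : K -> R) n (r : 'I_n -> R)
    (f : pseries K n) : R :=
  sup [set x : R | exists nu : multi_index n, x = v (f nu) * rpow r nu].

Definition ps_mul (L : comNzRingType) n (x y : pseries L n) : pseries L n :=
  fun nu => \sum_(mu : {ffun 'I_n -> 'I_(mi_deg nu).+1} | [forall i, (mu i <= nu i)%N])
      x [ffun i => nat_of_ord (mu i)] * y [ffun i => (nu i - mu i)%N].

Definition ps_one (L : comNzRingType) n : pseries L n :=
  fun nu => if nu == mi_zero n then 1 else 0.

Definition ps_exp (L : comNzRingType) n (x : pseries L n) (m : nat) : pseries L n :=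
  iter m (ps_mul x) (@ps_one L n).

(* The image of k{r^{-1}T} (x)_k L inside L[[T]] (the natural map is injective):
   finite sums  sum_i f_i (x) b_i  with f_i in k{r^{-1}T} and b_i in L. *)
Definition in_tate_tensor (R : realType) (k : fieldType) (v : k -> R) n (r : 'I_n -> R)
    (L : fieldType) (iota : {rmorphism k -> L}) (g : pseries L n) : Prop :=
  exists (m : nat) (fs : 'I_m -> pseries k n) (bs : 'I_m -> L),
    (forall i, in_tate v r (fs i)) /\
    (forall nu, g nu = \sum_(i < m) iota (fs i nu) * bs i).

(* f + a, i.e. f (x) 1 + 1 (x) a, as an L-power series *)
Definition tensor_add_const (k L : fieldType) (iota : {rmorphism k -> L}) n
    (f : pseries k n) (a : L) : pseries L n :=
  fun nu => iota (f nu) + (if nu == mi_zero n then a else 0).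

Definition has_compatible_proots (R : realType) (k : fieldType) (v : k -> R) n
    (r : 'I_n -> R) (L : fieldType) (iota : {rmorphism k -> L}) (p : nat)
    (g : pseries L n) : Prop :=
  exists s : nat -> pseries L n,
    (forall e, in_tate_tensor v r iota (s e)) /\
    (forall nu, s 0%N nu = g nu) /\
    (forall e nu, ps_exp (s e.+1) p nu = s e nu).

(* Main.v *)
Require Import Defs.
From mathcomp Require Import all_boot all_order all_algebra.
From mathcomp Require Import boolp classical_sets reals.
From mathcomp Require Import zify ring lra.
Set Implicit Arguments. Unset Strict Implicit. Unset Printing Implicit Defensive.
Import Order.TTheory GRing.Theory Num.Theory.
Local Open Scope ring_scope.


Definition mi_le n (a b : multi_index n) := [forall i, (a i <= b i)%N].

Section MI.
Variable n : nat.
Implicit Types a b c nu mu : multi_index n.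

Lemma mi_le_trans a b c : mi_le a b -> mi_le b c -> mi_le a c.
Proof.
move=> /forallP H1 /forallP H2; apply/forallP => i; exact: leq_trans (H1 i) (H2 i).
Qed.

Lemma mi_le_refl a : mi_le a a.
Proof. by apply/forallP. Qed.

Lemma mi_le0 a : mi_le (mi_zero n) a.
Proof. by apply/forallP => i; rewrite ffunE. Qed.

Lemma le_deg nu i : (nu i <= mi_deg nu)%N.
Proof. by rewrite /mi_deg (bigD1 i) //= leq_addr. Qed.

Lemma mi_degD a b nu : (forall i, a i + b i = nu i)%N ->
  (mi_deg a + mi_deg b)%N = mi_deg nu.
Proof. by move=> H; rewrite /mi_deg -big_split; apply: eq_bigr => i _; exact: H. Qed.

Lemma mi_deg0 a : (mi_deg a == 0%N) = (a == mi_zero n).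
Proof.
rewrite /mi_deg sum_nat_eq0; apply/forallP/eqP => [H|->].
  by apply/ffunP => i; rewrite ffunE; apply/eqP; exact: H.
by move=> i; rewrite ffunE.
Qed.

Lemma mi_lt_deg a nu : mi_le a nu -> a != nu -> (mi_deg a < mi_deg nu)%N.
Proof.
move=> /forallP H hne.
pose b : multi_index n := [ffun i => (nu i - a i)%N].
have hab : forall i, (a i + b i = nu i)%N by move=> i; rewrite ffunE subnKC.
rewrite -(mi_degD hab) -{1}[mi_deg a]addn0 ltn_add2l lt0n mi_deg0.
apply: contra hne => /eqP hb; apply/eqP/ffunP => i.
by rewrite -hab hb ffunE addn0.
Qed.

Lemma mi_le_antisym a b : mi_le a b -> mi_le b a -> a = b.
Proof.
move=> /forallP H1 /forallP H2; apply/ffunP => i; apply/eqP.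
by rewrite eqn_leq H1 H2.
Qed.

End MI.

Section PS.
Variables (L : comNzRingType) (n : nat).
Implicit Types (x y : pseries L n) (a b nu : multi_index n).

Definition fa nu (mu : {ffun 'I_n -> 'I_(mi_deg nu).+1}) : multi_index n :=
  [ffun i => nat_of_ord (mu i)].
Definition fb nu (mu : {ffun 'I_n -> 'I_(mi_deg nu).+1}) : multi_index n :=
  [ffun i => (nu i - mu i)%N].
Definition mP nu (mu : {ffun 'I_n -> 'I_(mi_deg nu).+1}) : bool :=
  [forall i, (mu i <= nu i)%N].
Arguments fa : clear implicits.
Arguments fb : clear implicits.
Arguments mP : clear implicits.

Lemma ps_mulE x y nu : ps_mul x y nu =
  \sum_(mu | mP nu mu) x (fa nu mu) * y (fb nu mu).
Proof. by []. Qed.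

Lemma fab nu mu : mP nu mu -> forall i, (fa nu mu i + fb nu mu i = nu i)%N.
Proof. by move=> /forallP H i; rewrite !ffunE subnKC. Qed.

Lemma fa_le nu mu : mP nu mu -> mi_le (fa nu mu) nu.
Proof. by move=> /forallP H; apply/forallP => i; rewrite ffunE. Qed.

Lemma fb_le nu mu : mi_le (fb nu mu) nu.
Proof. by apply/forallP => i; rewrite ffunE leq_subr. Qed.

Lemma fa_inj nu (mu mu' : {ffun 'I_n -> 'I_(mi_deg nu).+1}) :
  fa nu mu = fa nu mu' -> mu = mu'.
Proof.
move=> /ffunP H; apply/ffunP => i; apply: val_inj => /=.
by have := H i; rewrite !ffunE.
Qed.

Definition mu0 nu : {ffun 'I_n -> 'I_(mi_deg nu).+1} := [ffun i => ord0].
Definition mu1 nu : {ffun 'I_n -> 'I_(mi_deg nu).+1} := [ffun i => inord (nu i)].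

Lemma mP0 nu : mP nu (mu0 nu).
Proof. by apply/forallP => i; rewrite ffunE. Qed.
Lemma mP1 nu : mP nu (mu1 nu).
Proof. by apply/forallP => i; rewrite ffunE inordK // ltnS le_deg. Qed.
Lemma fa0 nu : fa nu (mu0 nu) = mi_zero n.
Proof. by apply/ffunP => i; rewrite !ffunE. Qed.
Lemma fb0 nu : fb nu (mu0 nu) = nu.
Proof. by apply/ffunP => i; rewrite !ffunE subn0. Qed.
Lemma fa1 nu : fa nu (mu1 nu) = nu.
Proof. by apply/ffunP => i; rewrite !ffunE inordK // ltnS le_deg. Qed.
Lemma fb1 nu : fb nu (mu1 nu) = mi_zero n.
Proof. by apply/ffunP => i; rewrite !ffunE inordK ?subnn // ltnS le_deg. Qed.

Lemma ps_mul0 x y : ps_mul x y (mi_zero n) = x (mi_zero n) * y (mi_zero n).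
Proof.
rewrite ps_mulE (bigD1 (mu0 _)) ?mP0 //= fa0 fb0 big1 ?addr0 // => mu /andP[hP hne].
exfalso; move/negP: hne; apply; apply/eqP/fa_inj; rewrite fa0.
apply/ffunP => i; have := fab hP i; rewrite !ffunE.
lia.
Qed.

Lemma mu0_ne1 nu : nu != mi_zero n -> mu0 nu != mu1 nu.
Proof.
move=> hnu; apply: contra hnu => /eqP h.
by rewrite -(fa1 nu) -h fa0.
Qed.

Lemma ps_mul_split x y nu : nu != mi_zero n ->
  ps_mul x y nu = x (mi_zero n) * y nu + x nu * y (mi_zero n) +
   \sum_(mu | mP nu mu && (fa nu mu != mi_zero n) && (fa nu mu != nu)) x (fa nu mu) * y (fb nu mu).
Proof.
move=> hnu; rewrite ps_mulE (bigD1 (mu0 _)) ?mP0 //= fa0 fb0.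
rewrite (bigD1 (mu1 nu)) /=; last by rewrite mP1 eq_sym mu0_ne1.
rewrite fa1 fb1 addrA; congr (_ + _ + _); apply: eq_bigl => mu.
have E0 : (fa nu mu == mi_zero n) = (mu == mu0 nu).
  by apply/eqP/eqP => [h|->]; [apply: fa_inj; rewrite fa0 | rewrite fa0].
have E1 : (fa nu mu == nu) = (mu == mu1 nu).
  by apply/eqP/eqP => [h|->]; [apply: fa_inj; rewrite fa1 | rewrite fa1].
by rewrite E0 E1.
Qed.

Lemma ps_expS x m : ps_exp x m.+1 = ps_mul x (ps_exp x m).
Proof. by []. Qed.

Lemma ps_exp_at0 x m : ps_exp x m (mi_zero n) = x (mi_zero n) ^+ m.
Proof.
elim: m => [|m IH]; first by rewrite /ps_exp /= /ps_one eqxx.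
by rewrite ps_expS ps_mul0 IH exprS.
Qed.

Lemma ps_exp_loc x y nu : (forall mu, mi_le mu nu -> x mu = y mu) ->
  forall m, ps_exp x m nu = ps_exp y m nu.
Proof.
move=> H m; elim: m nu H => [|m IH] nu H; first by [].
rewrite !ps_expS !ps_mulE; apply: eq_bigr => mu hP.
rewrite H ?fa_le // (IH (fb nu mu)) // => mu' hle.
by apply: H; apply: mi_le_trans hle (fb_le _).
Qed.

Lemma ps_exp_lin x x' nu : nu != mi_zero n ->
  (forall mu, mi_le mu nu -> mu != nu -> x mu = x' mu) -> x' nu = 0 ->
  forall m, ps_exp x m nu = ps_exp x' m nu + m%:R * x (mi_zero n) ^+ m.-1 * x nu.
Proof.
move=> hnu H h0 m; elim: m => [|m IH].
  by rewrite /ps_exp /= /ps_one (negbTE hnu) mul0r mul0r addr0.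
rewrite !ps_expS !(ps_mul_split _ _ hnu) IH h0 mul0r addr0.
have hx0 : x (mi_zero n) = x' (mi_zero n) by apply: H; [exact: mi_le0| rewrite eq_sym].
have -> : \sum_(mu | mP nu mu && (fa nu mu != mi_zero n) && (fa nu mu != nu))
     x (fa nu mu) * ps_exp x m (fb nu mu) =
   \sum_(mu | mP nu mu && (fa nu mu != mi_zero n) && (fa nu mu != nu))
     x' (fa nu mu) * ps_exp x' m (fb nu mu).
  apply: eq_bigr => mu /andP[/andP[hP hn0] hnn].
  rewrite H ?fa_le //; congr (_ * _); apply: ps_exp_loc => mu' hle.
  apply: H; first exact: mi_le_trans hle (fb_le _).
  apply/eqP => heq; move: hle; rewrite heq => hle.
  apply/negP: hn0; apply/negPn/eqP/ffunP => i; rewrite !ffunE.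
  move/forallP: hle => /(_ i); rewrite ffunE.
  move=> hh; have := fab hP i; rewrite !ffunE; lia.
rewrite ps_exp_at0 -hx0.
case: m {IH} => [|m] /=.
  rewrite !mul0r !addr0 expr0 mulr1; ring.
rewrite exprS; ring.
Qed.

End PS.


Section Abs.
Variables (R : realType) (K : fieldType) (w : K -> R).
Hypothesis hw : nonarch_abs w.

Lemma abs_ge0 x : 0 <= w x. Proof. by case: hw. Qed.
Lemma abs0 : w 0 = 0. Proof. by case: hw => _ h _ _; apply/h. Qed.
Lemma abs_eq0 x : (w x == 0) = (x == 0).
Proof. by case: hw => _ h _ _; apply/eqP/eqP => /h. Qed.
Lemma absM x y : w (x * y) = w x * w y. Proof. by case: hw. Qed.
Lemma absD_max x y : w (x + y) <= Num.max (w x) (w y). Proof. by case: hw. Qed.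
Lemma absD_le x y B : w x <= B -> w y <= B -> w (x + y) <= B.
Proof. move=> h1 h2; apply: le_trans (absD_max x y) _; by rewrite ge_max h1 h2. Qed.
Lemma abs1 : w 1 = 1.
Proof.
have h := absM 1 1; rewrite mulr1 in h.
have h0 : w 1 != 0 by rewrite abs_eq0 oner_eq0.
by apply: (mulfI h0); rewrite -h mulr1.
Qed.
Lemma absN1 : w (-1) = 1.
Proof.
have h := absM (-1) (-1); rewrite mulrNN mulr1 abs1 in h.
have h0 := abs_ge0 (-1).
have : (w (-1) - 1) * (w (-1) + 1) = 0 by rewrite -subr_sqr expr1n expr2 -h subrr.
move/eqP; rewrite mulf_eq0 => /orP[]; rewrite ?subr_eq0 => /eqP //.
move=> hh; have : w (-1) = -1 by apply/eqP; rewrite -subr_eq0 opprK hh.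
by move=> e; move: h0; rewrite e ler0N1.
Qed.
Lemma absN x : w (- x) = w x.
Proof. by rewrite -mulN1r absM absN1 mul1r. Qed.
Lemma absB_le x y B : w x <= B -> w y <= B -> w (x - y) <= B.
Proof. by move=> h1 h2; apply: absD_le => //; rewrite absN. Qed.
Lemma absV x : w (x^-1) = (w x)^-1.
Proof.
have [->|hx] := eqVneq x 0; first by rewrite invr0 abs0 invr0.
have h := absM x x^-1; rewrite mulfV // abs1 in h.
have hw0 : w x != 0 by rewrite abs_eq0.
by rewrite -[LHS]mul1r -(mulVf hw0) -mulrA -h mulr1.
Qed.
Lemma absX x m : w (x ^+ m) = w x ^+ m.
Proof. by elim: m => [|m IH]; rewrite ?expr0 ?abs1 // !exprS absM IH. Qed.

Lemma abs_sum (I : finType) (P : pred I) (F : I -> K) B :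
  0 <= B -> (forall i, P i -> w (F i) <= B) -> w (\sum_(i | P i) F i) <= B.
Proof.
move=> hB H; elim/big_ind: _ => //; first by rewrite abs0.
by move=> x y; apply: absD_le.
Qed.

Lemma abs_dom x y : w x < w y -> w (y + x) = w y.
Proof.
move=> hlt; apply/eqP; rewrite eq_le; apply/andP; split.
  by apply: absD_le => //; exact: ltW.
have : w y <= Num.max (w (y + x)) (w (- x)).
  by rewrite -{1}(addrK x y) absD_max.
rewrite le_max absN => /orP[] // h; by move: (lt_le_trans hlt h); rewrite ltxx.
Qed.

End Abs.


Section Weights.
Variables (R : realType) (n : nat) (r : 'I_n -> R).
Hypothesis hr : forall i, 0 < r i.

Lemma rpow_gt0 nu : 0 < rpow r nu.
Proof. by rewrite /rpow; apply: prodr_gt0 => i _; rewrite exprn_gt0. Qed.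
Lemma rpow_ge0 nu : 0 <= rpow r nu.
Proof. exact: ltW (rpow_gt0 nu). Qed.
Lemma rpow0 : rpow r (mi_zero n) = 1.
Proof. by rewrite /rpow big1 // => i _; rewrite ffunE expr0. Qed.
Lemma rpowD (a b nu : multi_index n) : (forall i, a i + b i = nu i)%N ->
  rpow r a * rpow r b = rpow r nu.
Proof.
by move=> H; rewrite /rpow -big_split; apply: eq_bigr => i _ /=; rewrite -exprD H.
Qed.

Variables (K : fieldType) (w : K -> R).
Hypothesis hw : nonarch_abs w.

Definition W (x : pseries K n) nu := w (x nu) * rpow r nu.

Lemma W_ge0 (x : pseries K n) nu : 0 <= W x nu.
Proof. by apply: mulr_ge0; [exact: abs_ge0 | exact: rpow_ge0]. Qed.

Lemma W0 (x : pseries K n) : W x (mi_zero n) = w (x (mi_zero n)).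
Proof. by rewrite /W rpow0 mulr1. Qed.

Lemma W_mul (x y : pseries K n) (nu : multi_index n) (B : R) : 0 <= B ->
  (forall a b : multi_index n, (forall i, a i + b i = nu i)%N -> W x a * W y b <= B) ->
  W (ps_mul x y) nu <= B.
Proof.
move=> hB H; rewrite /W ps_mulE.
have hp := rpow_gt0 nu.
rewrite -ler_pdivlMr //; apply: abs_sum => //; first by apply: divr_ge0 => //; exact: ltW.
move=> mu hP; rewrite ler_pdivlMr // absM // -(rpowD (fab hP)).
have := H _ _ (fab hP); rewrite /W.
by move=> h; apply: le_trans h; rewrite le_eqVlt; apply/orP; left; apply/eqP; ring.
Qed.

Lemma W_sub (a b : K) nu : w (a - b) * rpow r nu <= Num.max (w a * rpow r nu) (w b * rpow r nu).
Proof.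
have hp := rpow_gt0 nu.
rewrite -ler_pdivlMr //; apply: absB_le => //; rewrite ler_pdivlMr //.
  by rewrite le_max lexx.
by rewrite le_max lexx orbT.
Qed.

Lemma fab_0l (a b nu : multi_index n) : (forall i, a i + b i = nu i)%N ->
  a = mi_zero n -> b = nu.
Proof. by move=> H ha; apply/ffunP => i; rewrite -H ha ffunE. Qed.
Lemma fab_0r (a b nu : multi_index n) : (forall i, a i + b i = nu i)%N ->
  b = mi_zero n -> a = nu.
Proof. by move=> H hb; apply/ffunP => i; rewrite -H hb ffunE addn0. Qed.
Lemma fab_lel (a b nu : multi_index n) : (forall i, a i + b i = nu i)%N -> mi_le a nu.
Proof. by move=> H; apply/forallP => i; rewrite -H leq_addr. Qed.
Lemma fab_ler (a b nu : multi_index n) : (forall i, a i + b i = nu i)%N -> mi_le b nu.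
Proof. by move=> H; apply/forallP => i; rewrite -H leq_addl. Qed.

Variables (beta : K) (rho B : R) (D : nat).
Hypotheses (hB0 : 0 <= B) (hrho0 : 0 <= rho) (hr1 : rho <= 1).
Let c := w beta.
Lemma c_ge0 : 0 <= c. Proof. exact: abs_ge0. Qed.

Definition bnd_at (x : pseries K n) lam0 :=
  forall mu, mi_le mu lam0 -> mu != mi_zero n ->
    W x mu <= rho * c /\ ((D < mi_deg mu)%N -> W x mu <= B * c).

Lemma pow_bound x lam0 : x (mi_zero n) = beta -> bnd_at x lam0 ->
  forall m lam, mi_le lam lam0 -> lam != mi_zero n ->
  W (ps_exp x m) lam <= rho * c ^+ m /\
  ((m * D < mi_deg lam)%N -> W (ps_exp x m) lam <= B * c ^+ m).
Proof.
move=> hx0 hb m; have hc := c_ge0; have hr0 := hrho0.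
elim: m => [|m IH] lam hle hne.
  rewrite /W /ps_exp /= /ps_one (negbTE hne) abs0 // mul0r expr0; split; [by rewrite mulr1 | by move=> _; rewrite mulr1].
have hcm : 0 <= c ^+ m by exact: exprn_ge0.
have hrX : forall X, 0 <= X -> rho * X <= X.
  by move=> X hX; have := ler_wpM2r hX hr1; rewrite mul1r.
have key : forall a b : multi_index n, (forall i, a i + b i = lam i)%N ->
   W x a * W (ps_exp x m) b <= rho * c ^+ m.+1 /\
   ((m.+1 * D < mi_deg lam)%N -> W x a * W (ps_exp x m) b <= B * c ^+ m.+1).
  move=> a b hab.
  have Wa := W_ge0 x a; have Wb := W_ge0 (ps_exp x m) b.
  have hdeg := mi_degD hab.
  have [ha|ha] := eqVneq a (mi_zero n).
    have hb' := fab_0l hab ha; subst b.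
    rewrite ha W0 hx0 -/c; have [h1 h2] := IH lam hle hne.
    split.
      apply: le_trans (ler_wpM2l hc h1) _.
      by rewrite exprS le_eqVlt; apply/orP; left; apply/eqP; ring.
    move=> hd; have h3 := h2 (leq_ltn_trans (leq_mul (leqnSn m) (leqnn D)) hd).
    apply: le_trans (ler_wpM2l hc h3) _.
    by rewrite exprS le_eqVlt; apply/orP; left; apply/eqP; ring.
  have [hb'|hb'] := eqVneq b (mi_zero n).
    have ha' := fab_0r hab hb'; subst a.
    rewrite hb' W0 ps_exp_at0 hx0 absX // -/c.
    have [h1 h2] := hb lam hle ha.
    split.
      apply: le_trans (ler_wpM2r hcm h1) _.
      by rewrite exprSr le_eqVlt; apply/orP; left; apply/eqP; ring.
    move=> hd; have : (D < mi_deg lam)%N.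
      by apply: leq_ltn_trans hd; rewrite mulSn leq_addr.
    move/h2 => h3; apply: le_trans (ler_wpM2r hcm h3) _.
    by rewrite exprSr le_eqVlt; apply/orP; left; apply/eqP; ring.
  have hal : mi_le a lam0 by apply: mi_le_trans (fab_lel hab) hle.
  have hbl : mi_le b lam by exact: fab_ler hab.
  have [h1 h2] := hb a hal ha.
  have [h3 h4] := IH b (mi_le_trans hbl hle) hb'.
  have hh : 0 <= rho * c * c ^+ m by apply: mulr_ge0 => //; apply: mulr_ge0.
  have hh' : 0 <= B * c * c ^+ m by apply: mulr_ge0 => //; apply: mulr_ge0.
  split.
    apply: le_trans (ler_pM Wa Wb h1 h3) _.
    have E : rho * c * (rho * c ^+ m) = rho * (rho * c * c ^+ m) by ring.
    rewrite E exprS; apply: le_trans (hrX _ hh) _.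
    by rewrite le_eqVlt; apply/orP; left; apply/eqP; ring.
  move=> hd; rewrite -hdeg mulSn in hd.
  have [hda|hdb] : (D < mi_deg a)%N \/ (m * D < mi_deg b)%N.
    by case: (ltnP D (mi_deg a)) => h; [left|right; rewrite -(ltn_add2l D); apply: leq_trans hd _; rewrite leq_add2r].
    apply: le_trans (ler_pM Wa Wb (h2 hda) h3) _.
    have E : B * c * (rho * c ^+ m) = rho * (B * c * c ^+ m) by ring.
    rewrite E exprS; apply: le_trans (hrX _ hh') _.
    by rewrite le_eqVlt; apply/orP; left; apply/eqP; ring.
  apply: le_trans (ler_pM Wa Wb h1 (h4 hdb)) _.
  have E : rho * c * (B * c ^+ m) = rho * (B * c * c ^+ m) by ring.
  rewrite E exprS; apply: le_trans (hrX _ hh') _.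
  by rewrite le_eqVlt; apply/orP; left; apply/eqP; ring.
have hBm : 0 <= B * c ^+ m.+1 by apply: mulr_ge0 => //; exact: exprn_ge0.
have hrm : 0 <= rho * c ^+ m.+1 by apply: mulr_ge0 => //; exact: exprn_ge0.
rewrite ps_expS; split.
  by apply: W_mul => // a b hab; case: (key a b hab).
by move=> hd; apply: W_mul => // a b hab; case: (key a b hab) => _ /(_ hd).
Qed.

Lemma E_bound x nu : x (mi_zero n) = beta -> bnd_at x nu -> x nu = 0 ->
  nu != mi_zero n -> forall m, (m * D < mi_deg nu)%N ->
  W (ps_exp x m) nu <= rho * B * c ^+ m.
Proof.
move=> hx0 hb hxnu hnu m; have hc := c_ge0; have hr0 := hrho0.
have hrB : 0 <= rho * B by apply: mulr_ge0.
elim: m => [|m IH] hd.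
  by rewrite /W /ps_exp /= /ps_one (negbTE hnu) abs0 // mul0r expr0 mulr1.
have hcm : 0 <= c ^+ m by exact: exprn_ge0.
have hT : 0 <= rho * B * c ^+ m.+1 by apply: mulr_ge0 => //; exact: exprn_ge0.
rewrite ps_expS; apply: W_mul => // a b hab.
have Wa := W_ge0 x a; have Wb := W_ge0 (ps_exp x m) b.
have hdeg := mi_degD hab.
have [ha|ha] := eqVneq a (mi_zero n).
  have hb' := fab_0l hab ha; subst b.
  rewrite ha W0 hx0 -/c.
  have h1 := IH (leq_ltn_trans (leq_mul (leqnSn m) (leqnn D)) hd).
  apply: le_trans (ler_wpM2l hc h1) _.
  by rewrite exprS le_eqVlt; apply/orP; left; apply/eqP; ring.
have [hb'|hb'] := eqVneq b (mi_zero n).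
  have ha' := fab_0r hab hb'; subst a.
  by rewrite /W hxnu abs0 // !mul0r.
have hal : mi_le a nu by exact: fab_lel hab.
have hbl : mi_le b nu by exact: fab_ler hab.
have [h1 h2] := hb a hal ha.
have [h3 h4] := pow_bound hx0 hb m hbl hb'.
rewrite -hdeg mulSn in hd.
have [hda|hdb] : (D < mi_deg a)%N \/ (m * D < mi_deg b)%N.
  by case: (ltnP D (mi_deg a)) => h; [left|right; rewrite -(ltn_add2l D); apply: leq_trans hd _; rewrite leq_add2r].
  apply: le_trans (ler_pM Wa Wb (h2 hda) h3) _.
  by rewrite exprS le_eqVlt; apply/orP; left; apply/eqP; ring.
apply: le_trans (ler_pM Wa Wb h1 (h4 hdb)) _.
by rewrite exprS le_eqVlt; apply/orP; left; apply/eqP; ring.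
Qed.

Lemma key_step (y g : pseries K n) nu (p : nat) : (0 < p)%N -> w (p%:R) = 1 ->
  y (mi_zero n) = beta -> nu != mi_zero n -> ps_exp y p nu = g nu ->
  (forall mu, mi_le mu nu -> mu != mi_zero n -> mu != nu ->
     W y mu <= rho * c /\ ((D < mi_deg mu)%N -> W y mu <= B * c)) ->
  (p * D < mi_deg nu)%N ->
  W y nu * c ^+ p.-1 <= Num.max (W g nu) (rho * B * c ^+ p).
Proof.
move=> hp hwp hy0 hnu hpow hyp hd.
have hc := c_ge0; have hr0 := hrho0.
pose x' : pseries K n := fun mu => if mu == nu then 0 else y mu.
have hx'nu : x' nu = 0 by rewrite /x' eqxx.
have hagree : forall mu, mi_le mu nu -> mu != nu -> y mu = x' mu.
  by move=> mu _ hne; rewrite /x' (negbTE hne).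
have lin := ps_exp_lin hnu hagree hx'nu p.
have hx'0 : x' (mi_zero n) = beta by rewrite /x' eq_sym (negbTE hnu).
have hbx : bnd_at x' nu.
  move=> mu hle hne; have [->|hmn] := eqVneq mu nu.
    rewrite /W hx'nu abs0 // mul0r; split; first by apply: mulr_ge0.
    by move=> _; apply: mulr_ge0.
  have -> : W x' mu = W y mu by rewrite /W /x' (negbTE hmn).
  exact: hyp.
have hE := E_bound hx'0 hbx hx'nu hnu hd.
have eq1 : g nu - ps_exp x' p nu = p%:R * beta ^+ p.-1 * y nu.
  by rewrite -hpow lin hy0 addrC addKr.
have hW : W y nu * c ^+ p.-1 = w (g nu - ps_exp x' p nu) * rpow r nu.
  rewrite eq1 !absM // hwp absX // mul1r /W -/c.
  by apply/eqP; rewrite eq_le; apply/andP; split; rewrite le_eqVlt; apply/orP; left; apply/eqP; ring.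
rewrite hW; apply: le_trans (W_sub _ _ _) _.
rewrite ge_max; apply/andP; split; rewrite le_max; apply/orP; [left; exact: lexx | right].
exact: hE.
Qed.

End Weights.


Lemma mi_deg_zero n : mi_deg (mi_zero n) = 0%N.
Proof. by apply/eqP; rewrite mi_deg0. Qed.

Section Closure.
Variables (K : comNzRingType) (n : nat) (S : K -> Prop).
Hypotheses (S0 : S 0) (S1 : S 1) (SD : forall a b, S a -> S b -> S (a + b))
  (SM : forall a b, S a -> S b -> S (a * b)).

Lemma ps_exp_closed (x : pseries K n) : (forall mu, S (x mu)) ->
  forall m nu, S (ps_exp x m nu).
Proof.
move=> hx m; elim: m => [|m IH] nu.
  by rewrite /ps_exp /= /ps_one; case: ifP.
rewrite ps_expS ps_mulE; elim/big_ind: _ => //.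
by move=> mu _; apply: SM.
Qed.
End Closure.

Section Construct.
Variables (K : fieldType) (n : nat) (g : pseries K n) (beta : K) (p : nat).
Hypotheses (hbeta : beta ^+ p = g (mi_zero n)) (hunit : p%:R * beta ^+ p.-1 != 0).

Fixpoint wN (N : nat) : pseries K n :=
  match N with
  | 0%N => fun nu => if nu == mi_zero n then beta else 0
  | N'.+1 => fun nu => if mi_deg nu == N'.+1
      then (g nu - ps_exp (wN N') p nu) / (p%:R * beta ^+ p.-1) else wN N' nu
  end.

Definition wfin : pseries K n := fun nu => wN (mi_deg nu) nu.

Lemma wN_high N nu : (N < mi_deg nu)%N -> wN N nu = 0.
Proof.
elim: N => [|N IH] /= hd.
  by case: ifP => // /eqP h; move: hd; rewrite h mi_deg_zero.
by rewrite ifN ?IH //; [exact: ltnW | rewrite neq_ltn hd orbT].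
Qed.

Lemma wN_fin N nu : (mi_deg nu <= N)%N -> wN N nu = wfin nu.
Proof.
rewrite /wfin; elim: N => [|N IH] hd.
  by rewrite leqn0 in hd; rewrite (eqP hd).
have [e|ne] := eqVneq (mi_deg nu) N.+1; first by rewrite e.
by rewrite /= ifN ?ne // IH // -ltnS ltn_neqAle ne hd.
Qed.

Lemma wfin0 : wfin (mi_zero n) = beta.
Proof. by rewrite /wfin mi_deg_zero /= eqxx. Qed.

Lemma wfin_pow nu : ps_exp wfin p nu = g nu.
Proof.
have [->|hnu] := eqVneq nu (mi_zero n); first by rewrite ps_exp_at0 wfin0.
have hd : (0 < mi_deg nu)%N by rewrite lt0n mi_deg0.
set N := (mi_deg nu).-1.
have hN : mi_deg nu = N.+1 by rewrite /N prednK.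
rewrite (@ps_exp_loc _ _ wfin (wN N.+1) nu); last first.
  move=> mu hle; symmetry; apply: wN_fin; rewrite -hN.
  have [->|hne] := eqVneq mu nu; first by [].
  exact: ltnW (mi_lt_deg hle hne).
have hagree : forall mu, mi_le mu nu -> mu != nu -> wN N.+1 mu = wN N mu.
  move=> mu hle hne; have hlt := mi_lt_deg hle hne.
  by rewrite !wN_fin // -ltnS -hN // ltnW.
rewrite (ps_exp_lin hnu hagree (wN_high _)); last by rewrite hN.
rewrite (wN_fin (N := N.+1) (nu := mi_zero n)) ?mi_deg_zero // wfin0.
rewrite /= hN eqxx.
by rewrite mulrC divfK // addrC subrK.
Qed.

Variable (S : K -> Prop).
Hypotheses (S0 : S 0) (S1 : S 1) (SD : forall a b, S a -> S b -> S (a + b))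
  (SM : forall a b, S a -> S b -> S (a * b)) (SN : forall a, S a -> S (- a))
  (Sb : S beta) (Sg : forall nu, S (g nu)) (Sinv : S (p%:R * beta ^+ p.-1)^-1).

Lemma wN_closed N nu : S (wN N nu).
Proof.
elim: N nu => [|N IH] nu /=; first by case: ifP.
case: ifP => // _; apply: SM => //; apply: SD => //; apply: SN.
exact: ps_exp_closed.
Qed.

Lemma wfin_closed nu : S (wfin nu).
Proof. exact: wN_closed. Qed.
End Construct.


Lemma small_inv (R : realType) (d : R) : 0 < d -> exists N : nat,
  forall M : nat, (N <= M)%N -> forall y : R, 0 <= y -> y * M.+1%:R < 1 -> y < d.
Proof.
move=> hd; have hd' : 0 <= d^-1 by rewrite invr_ge0 ltW.
exists (Num.Def.archi_bound d^-1) => M hM y hy hyM.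
have hb := archi_boundP hd'.
have hM' : d^-1 < M.+1%:R.
  apply: lt_le_trans hb _; rewrite ler_nat; exact: leqW.
have hpos : 0 < M.+1%:R :> R by rewrite ltr0Sn.
have : y < M.+1%:R^-1 by rewrite -[M.+1%:R^-1]mul1r ltr_pdivlMr.
move=> h; apply: lt_trans h _.
by rewrite -(invrK d) ltf_pV2 // ?posrE ?invr_gt0.
Qed.

Section NormEq.
Variables (R : realType) (k K : fieldType) (v : k -> R) (vb : K -> R)
  (iota : {rmorphism k -> K}).
Hypotheses (hv : nonarch_abs v) (hvb : nonarch_abs vb) (hcomp : complete_abs v)
  (hext : forall x, vb (iota x) = v x).

Definition lc m (e : 'I_m -> K) (x : 'I_m -> k) := \sum_j iota (x j) * e j.
Definition indep m (e : 'I_m -> K) :=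
  forall x : 'I_m -> k, lc e x = 0 -> forall j, x j = 0.

Lemma lc_bound m (e : 'I_m -> K) x B : 0 <= B ->
  (forall j, v (x j) * vb (e j) <= B) -> vb (lc e x) <= B.
Proof.
move=> hB H; apply: abs_sum => // j _; by rewrite absM // hext.
Qed.

Lemma lcB m (e : 'I_m -> K) x y : lc e (fun j => x j - y j) = lc e x - lc e y.
Proof.
by rewrite /lc -sumrB; apply: eq_bigr => j _; rewrite rmorphB mulrBl.
Qed.

Lemma NE m : forall (e : 'I_m -> K), indep e ->
  exists C, 0 < C /\ forall x i, v (x i) <= C * vb (lc e x).
Proof.
elim: m => [|m IH] e hind.
  by exists 1; split => // x [].
suff H : forall i, exists C, 0 < C /\ forall x, v (x i) <= C * vb (lc e x).
  have [Cf hCf] := choice H.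
  exists (1 + \sum_i Cf i); split.
    have : 0 <= \sum_i Cf i by apply: sumr_ge0 => i _; exact: ltW (hCf i).1.
    lra.
  move=> x i; apply: le_trans ((hCf i).2 x) _; apply: ler_wpM2r; first exact: abs_ge0.
  have h0 : 0 <= \sum_(j | j != i) Cf j by apply: sumr_ge0 => j _; exact: ltW (hCf j).1.
  rewrite (bigD1 i) //=; lra.
move=> i; apply: contrapT => hno.
have hno' : forall N : nat, exists x : 'I_m.+1 -> k, N.+1%:R * vb (lc e x) < v (x i).
  move=> N; apply: contrapT => hh; apply: hno; exists N.+1%:R; split => // x.
  rewrite leNgt; apply/negP => hlt; apply: hh; by exists x.
have [X hX] := choice hno'.
have hXi : forall N, X N i != 0.
  move=> N; apply/eqP => h; have := hX N; rewrite h abs0 // ltNge; apply/negP/negPn.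
  by apply: mulr_ge0 => //; exact: abs_ge0.
pose z N j := X N j / X N i.
have hzi : forall N, z N i = 1 by move=> N; rewrite /z mulfV.
pose u N := lc e (z N).
have hu : forall N, vb (u N) * N.+1%:R < 1.
  move=> N; have hvX : 0 < v (X N i) by rewrite lt0r abs_eq0 // hXi abs_ge0.
  have -> : u N = (iota (X N i))^-1 * lc e (X N).
    rewrite /u /lc mulr_sumr; apply: eq_bigr => j _.
    by rewrite /z rmorphM fmorphV mulrA (mulrC _ (iota (X N i))^-1).
  rewrite absM // absV // hext -mulrA mulrC ltr_pdivrMr // mul1r mulrC.
  exact: hX.
have hsmall : forall d, 0 < d -> exists N0 : nat, forall N, (N0 <= N)%N -> vb (u N) < d.
  move=> d hd; have [N0 hN0] := small_inv hd; exists N0 => N hN.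
  by apply: hN0 hN _ (abs_ge0 hvb _) (hu N).
pose e' j := e (lift i j).
have hind' : indep e'.
  move=> x' hx' j.
  pose x j0 := if unlift i j0 is Some j1 then x' j1 else 0.
  have : lc e x = 0.
    rewrite /lc (bigD1_ord i) //= /x unlift_none rmorph0 mul0r add0r.
    transitivity (lc e' x'); last exact: hx'.
    rewrite /lc; apply: eq_bigr => j1 _; by rewrite liftK.
  move/hind => /(_ (lift i j)); by rewrite /x liftK.
have [C' [hC' hC'b]] := IH e' hind'.
have hsplit : forall y : 'I_m.+1 -> k,
    lc e y = iota (y i) * e i + lc e' (fun j => y (lift i j)).
  by move=> y; rewrite /lc (bigD1_ord i).
have huN : forall N, u N = e i + lc e' (fun j => z N (lift i j)).
  by move=> N; rewrite /u hsplit hzi rmorph1 mul1r.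
have hcauchy : forall j, exists l, forall eps, 0 < eps -> exists N0 : nat,
    forall N, (N0 <= N)%N -> v (z N (lift i j) - l) < eps.
  move=> j; apply: hcomp => eps heps.
  have hd : 0 < eps / C' by apply: divr_gt0.
  have [N0 hN0] := hsmall _ hd; exists N0 => N M hN hM.
  have := hC'b (fun j => z N (lift i j) - z M (lift i j)) j.
  have hl : forall N', lc e' (fun j => z N' (lift i j)) = u N' - e i.
    by move=> N'; rewrite huN addrC addKr.
  have hE : (u N - e i) - (u M - e i) = u N - u M by ring.
  rewrite lcB !hl hE /= => h; apply: le_lt_trans h _.
  rewrite -ltr_pdivlMl // mulrC.
  by apply: le_lt_trans (absD_max hvb _ _) _; rewrite absN // gt_max !hN0.
have [lf hlf] := choice hcauchy.
pose T := e i + lc e' lf.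
pose E := 1 + \sum_j vb (e' j).
have hE1 : 1 <= E.
  have : 0 <= \sum_j vb (e' j) by apply: sumr_ge0 => j _; exact: abs_ge0.
  rewrite /E; lra.
have hTd : forall d, 0 < d -> vb T <= d * E.
  move=> d hd.
  have hj : forall j, exists N0 : nat, forall N, (N0 <= N)%N ->
      v (z N (lift i j) - lf j) < d by move=> j; exact: hlf.
  have [Nf hNf] := choice hj.
  have [N1 hN1] := hsmall _ hd.
  pose N := (\max_j Nf j + N1)%N.
  have hT : T = u N + lc e' (fun j => lf j - z N (lift i j)).
    by rewrite lcB huN /T; ring.
  rewrite hT; apply: absD_le => //.
    apply: ltW; apply: lt_le_trans (hN1 N (leq_addl _ _)) _.
    by rewrite -{1}(mulr1 d) ler_wpM2l // ltW.
  apply: lc_bound; first by apply: mulr_ge0; [exact: ltW | lra].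
  move=> j; apply: ler_pM; [exact: abs_ge0 | exact: abs_ge0 | |].
    rewrite -absN // opprB; apply: ltW; apply: hNf.
    apply: leq_trans (leq_addr _ _); exact: leq_bigmax.
  have h0 : 0 <= \sum_(j0 | j0 != j) vb (e' j0).
    by apply: sumr_ge0 => j0 _; exact: abs_ge0.
  by rewrite /E (bigD1 j) //=; lra.
have hT0 : vb T = 0.
  apply/eqP; rewrite eq_le abs_ge0 // andbT; apply/negP => /negP.
  rewrite -ltNge => hpos.
  have hE0 : 0 < E by lra.
  have hd : 0 < vb T / (2 * E) by apply: divr_gt0 => //; lra.
  have := hTd _ hd.
  have -> : vb T / (2 * E) * E = vb T / 2 by field; lra.
  lra.
have : T = 0 by apply/eqP; rewrite -(abs_eq0 hvb) hT0.
pose x j0 := if unlift i j0 is Some j1 then lf j1 else 1.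
have hx : lc e x = T.
  rewrite hsplit /x unlift_none rmorph1 mul1r /T; congr (_ + _).
  by rewrite /lc; apply: eq_bigr => j _; rewrite liftK.
rewrite -hx => /hind /(_ i); rewrite /x unlift_none => /eqP.
by rewrite oner_eq0.
Qed.

End NormEq.


Section Tensor.
Variables (R : realType) (k K : fieldType) (v : k -> R) (vb : K -> R)
  (iota : {rmorphism k -> K}).
Hypotheses (hv : nonarch_abs v) (hvb : nonarch_abs vb) (hcomp : complete_abs v)
  (hext : forall x, vb (iota x) = v x).

Definition inS (beta : K) (x : K) := exists q : {poly k}, x = (map_poly iota q).[beta].

Lemma span_basis (beta : K) :
  (exists q : {poly k}, q != 0 /\ root (map_poly iota q) beta) ->
  exists m (e : 'I_m -> K), indep iota e /\
    forall y, inS beta y -> exists x, y = lc iota e x.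
Proof.
move=> hex.
pose P d := `[< exists q : {poly k}, [/\ q != 0, root (map_poly iota q) beta & size q = d] >].
have exP : exists d, P d.
  by case: hex => q [hq hr]; exists (size q); apply/asboolP; exists q.
case: (ex_minnP exP) => D /asboolP [q0 [hq0 hr0 hs0]] hmin.
exists (size q0).-1, (fun j : 'I_(size q0).-1 => beta ^+ j); split.
  move=> x hx j.
  pose xf (i : nat) : k := oapp x 0 (insub i : option 'I_(size q0).-1).
  have hxf : forall j : 'I_(size q0).-1, xf j = x j by move=> j'; rewrite /xf valK.
  pose Q := \poly_(i < (size q0).-1) xf i.
  have hQ : (map_poly iota Q).[beta] = lc iota (fun j => beta ^+ j) x.
    rewrite (horner_coef_wide (n := (size q0).-1)); last first.
      by rewrite size_map_poly size_poly.
    apply: eq_bigr => i _; rewrite coef_map coef_poly ltn_ord /=.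
    by rewrite hxf.
  have hQ0 : Q = 0.
    apply: contraTeq isT => hQn; apply/negP => _.
    have : P (size Q) by apply/asboolP; exists Q; split => //; rewrite /root hQ hx.
    move/hmin; rewrite -hs0 => hle.
    have := size_poly (size q0).-1 xf; rewrite -/Q => hle2.
    have hpos : (0 < size q0)%N by rewrite size_poly_gt0.
    by move: (leq_trans hle hle2); rewrite -ltnS prednK // ltnn.
  have := congr1 (fun p : {poly k} => p`_j) hQ0.
  by rewrite coef_poly ltn_ord coef0 hxf.
move=> y [Q ->].
exists (fun j : 'I_(size q0).-1 => (Q %% q0)`_j).
have hq0n : q0 != 0 by [].
rewrite {1}(divp_eq Q q0) rmorphD rmorphM /= hornerD hornerM (rootP hr0) mulr0 add0r.
rewrite (horner_coef_wide (n := (size q0).-1)); last first.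
  rewrite size_map_poly -ltnS prednK ?size_poly_gt0 // ltn_modp //.
by apply: eq_bigr => i _; rewrite coef_map.
Qed.

Variables (n : nat) (r : 'I_n -> R).
Hypothesis hr : forall i, 0 < r i.

Lemma tensor_of_S (beta : K) (g : pseries K n) :
  (exists q : {poly k}, q != 0 /\ root (map_poly iota q) beta) ->
  (forall nu, inS beta (g nu)) ->
  (forall eps, 0 < eps -> exists N : nat, forall nu, (N < mi_deg nu)%N ->
      vb (g nu) * rpow r nu < eps) ->
  in_tate_tensor v r iota g.
Proof.
move=> halg hS hdec.
have [m [e [hind hspan]]] := span_basis halg.
have [C [hC hCb]] := NE hv hvb hcomp hext hind.
have hX : forall nu, exists x, g nu = lc iota e x by move=> nu; exact: hspan.
have [X hXe] := choice hX.
exists m, (fun j nu => X nu j), e; split; last by move=> nu; rewrite hXe.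
move=> j eps heps.
have [N hN] := hdec (eps / C) (divr_gt0 heps hC).
exists N => nu hnu.
have h1 := hCb (X nu) j; rewrite -hXe in h1.
apply: le_lt_trans (ler_wpM2r (rpow_ge0 hr nu) h1) _.
by rewrite -mulrA mulrC -ltr_pdivlMr //; apply: hN.
Qed.

End Tensor.


Section InS.
Variables (k K : fieldType) (iota : {rmorphism k -> K}) (beta : K).

Lemma inS_const c : inS iota beta (iota c).
Proof. by exists c%:P; rewrite map_polyC hornerC. Qed.
Lemma inS_0 : inS iota beta 0. Proof. by rewrite -(rmorph0 iota); exact: inS_const. Qed.
Lemma inS_1 : inS iota beta 1. Proof. by rewrite -(rmorph1 iota); exact: inS_const. Qed.
Lemma inS_b : inS iota beta beta.
Proof. by exists 'X; rewrite map_polyX hornerX. Qed.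
Lemma inS_add a b : inS iota beta a -> inS iota beta b -> inS iota beta (a + b).
Proof. by move=> [q1 ->] [q2 ->]; exists (q1 + q2); rewrite rmorphD hornerD. Qed.
Lemma inS_mul a b : inS iota beta a -> inS iota beta b -> inS iota beta (a * b).
Proof. by move=> [q1 ->] [q2 ->]; exists (q1 * q2); rewrite rmorphM hornerM. Qed.
Lemma inS_opp a : inS iota beta a -> inS iota beta (- a).
Proof. by move=> [q1 ->]; exists (- q1); rewrite rmorphN hornerN. Qed.
Lemma inS_exp a m : inS iota beta a -> inS iota beta (a ^+ m).
Proof.
move=> h; elim: m => [|m IH]; first by rewrite expr0; exact: inS_1.
by rewrite exprS; apply: inS_mul.
Qed.

Lemma inS_inv : beta != 0 ->
  (exists q : {poly k}, q != 0 /\ root (map_poly iota q) beta) ->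
  inS iota beta beta^-1.
Proof.
move=> hb [q [hq hr]].
have [m [q1 hq1 eq]] := multiplicity_XsubC q 0.
rewrite hq /= in hq1.
have hr1 : (map_poly iota q1).[beta] = 0.
  move/rootP: hr; rewrite eq rmorphM rmorphXn /= map_polyXsubC rmorph0 hornerM.
  rewrite horner_exp hornerXsubC subr0 => /eqP; rewrite mulf_eq0 expf_eq0 (negbTE hb).
  by rewrite andbF orbF => /eqP.
set c0 := q1.[0].
have hc0 : c0 != 0 by [].
have : root (q1 - c0%:P) 0 by rewrite /root hornerD hornerN hornerC subrr.
case/factor_theorem => q2 hq2.
have hq1' : q1 = q2 * 'X + c0%:P.
  have e : q2 * 'X = q1 - c0%:P by rewrite hq2 polyC0 subr0.
  by rewrite e subrK.
have key : (map_poly iota q2).[beta] * beta + iota c0 = 0.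
  by rewrite -hr1 hq1' rmorphD rmorphM /= map_polyX map_polyC hornerMXaddC.
have hic : iota c0 != 0 by rewrite fmorph_eq0.
exists (q2 * (- c0^-1)%:P).
rewrite rmorphM /= map_polyC hornerM hornerC raddfN.
have hv : iota c0^-1 * iota c0 = 1 by rewrite -rmorphM mulVf // rmorph1.
apply: (mulfI hb); rewrite mulfV //.
have e1 : (map_poly iota q2).[beta] * beta = - iota c0 by apply/eqP; rewrite -subr_eq0 opprK key.
have e2 : beta * ((map_poly iota q2).[beta] * - iota c0^-1) =
   - ((map_poly iota q2).[beta] * beta) * iota c0^-1 by ring.
by rewrite e2 e1 opprK mulrC hv.
Qed.

End InS.

Lemma inS_sub (k K : fieldType) (iota : {rmorphism k -> K}) (beta b' : K) (p : nat) : beta = b' ^+ p ->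
  forall x, inS iota beta x -> inS iota b' x.
Proof.
move=> hb x [q ->]; elim/poly_ind: q => [|q c IH].
  by rewrite rmorph0 horner0; exact: inS_0.
rewrite rmorphD rmorphM /= map_polyX map_polyC hornerMXaddC.
apply: inS_add; last exact: inS_const.
by apply: inS_mul => //; rewrite hb; apply: inS_exp; exact: inS_b.
Qed.

Lemma pow_small (R : realType) (rho d : R) : 0 <= rho -> rho < 1 -> 0 < d ->
  exists j : nat, rho ^+ j.+1 < d.
Proof.
move=> h0 h1 hd.
have [->|hpos] := eqVneq rho 0; first by exists 0%N; rewrite expr1.
have hr : 0 < rho by rewrite lt0r hpos h0.
pose h := rho^-1 - 1.
have hh : 0 < h by rewrite /h subr_gt0 invf_gt1.
have bern : forall j : nat, 1 + j%:R * h <= (1 + h) ^+ j.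
  elim=> [|j IH]; first by rewrite mul0r addr0 expr0.
  rewrite exprS; apply: le_trans (_ : (1 + h) * (1 + j%:R * h) <= _).
    have : 0 <= j%:R * h * h by apply: mulr_ge0; [apply: mulr_ge0 => //; exact: ltW|exact: ltW].
    rewrite -natr1; nra.
  by apply: ler_wpM2l => //; apply: addr_ge0 => //; exact: ltW.
have hdh : 0 < d * h by apply: mulr_gt0.
have [N hN] := small_inv hdh.
exists N => //.
have hb := bern N.+1.
have e : 1 + h = rho^-1 by rewrite /h addrC subrK.
rewrite e exprVn in hb.
have hpj : 0 < rho ^+ N.+1 by apply: exprn_gt0.
have h2 : rho ^+ N.+1 * (1 + N.+1%:R * h) <= 1.
  by apply: le_trans (ler_wpM2l (ltW hpj) hb) _; rewrite mulfV ?lt0r_neq0.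
have h3 : rho ^+ N.+1 * h * N.+1%:R < 1.
  have : 0 < rho ^+ N.+1 by [].
  nra.
have := hN N (leqnn N) (rho ^+ N.+1 * h).
rewrite ltr_pM2r // => H; apply: H => //.
by apply: mulr_ge0; exact: ltW.
Qed.


Section Main.
Variables (R : realType) (k : fieldType) (v : k -> R) (n : nat) (r : 'I_n -> R)
  (kbar : closedFieldType) (iota : {rmorphism k -> kbar}) (vbar : kbar -> R) (p : nat).
Hypotheses (hv : nonarch_abs v) (hcomp : complete_abs v) (hp : prime p)
  (hvp : v p%:R = 1) (hr : forall i, 0 < r i)
  (halg : forall x : kbar, exists q : {poly k}, q != 0 /\ root (map_poly iota q) x)
  (hvbar : nonarch_abs vbar) (hext : forall x, vbar (iota x) = v x).
Variable rho : R.
Hypotheses (hr0 : 0 <= rho) (hr1 : rho < 1).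

Definition Inv (g : pseries kbar n) : Prop :=
  [/\ g (mi_zero n) != 0,
      forall nu, nu != mi_zero n -> W r vbar g nu <= rho * vbar (g (mi_zero n)),
      forall eps, 0 < eps -> exists N : nat, forall nu, (N < mi_deg nu)%N ->
         W r vbar g nu < eps
    & forall nu, inS iota (g (mi_zero n)) (g nu)].

Lemma hvbp : vbar p%:R = 1.
Proof. by rewrite -(rmorph_nat iota) hext. Qed.

Lemma step g : Inv g -> exists w, Inv w /\ forall nu, ps_exp w p nu = g nu.
Proof.
case=> hb0 hbnd hdec hS.
set beta := g (mi_zero n) in hb0 hbnd hS.
have hp0 : (0 < p)%N by exact: prime_gt0.
have [b' hb'] : exists b', b' ^+ p = beta.
  have [x hx] := @solve_monicpoly kbar p (fun i => if i == 0%N then beta else 0) hp0.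
  exists x; rewrite hx (bigD1 (Ordinal hp0)) //= expr0 mulr1 big1 ?addr0 // => i hi.
  have hi' : (i : nat) != 0%N.
    by apply: contra hi => /eqP h; apply/eqP/val_inj => /=; exact: h.
  by rewrite (negbTE hi') mul0r.
have hb'0 : b' != 0.
  apply/eqP => h; move: hb0; rewrite -hb' h expr0n.
  have -> : (p == 0)%N = false by rewrite eqn0Ngt hp0.
  by rewrite eqxx.
have hpn : (p%:R : kbar) != 0 by rewrite -(abs_eq0 hvbar) hvbp oner_eq0.
have hunit : p%:R * b' ^+ p.-1 != 0 by rewrite mulf_neq0 // expf_neq0.
pose w := wfin g b' p.
have hw0 : w (mi_zero n) = b' by exact: wfin0.
have hwp : forall nu, ps_exp w p nu = g nu by exact: wfin_pow.
have hwS : forall nu, inS iota b' (w nu).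
  apply: wfin_closed.
  - exact: inS_0.
  - exact: inS_1.
  - exact: inS_add.
  - exact: inS_mul.
  - exact: inS_opp.
  - exact: inS_b.
  - by move=> nu; apply: (inS_sub (esym hb')); exact: hS.
  rewrite invfM; apply: inS_mul.
    by rewrite -(rmorph_nat iota) -fmorphV; exact: inS_const.
  by rewrite -exprVn; apply: inS_exp; apply: inS_inv.
set c := vbar b'.
have hc : 0 < c by rewrite lt0r abs_eq0 // hb'0 abs_ge0.
have hvb : vbar beta = c ^+ p by rewrite -hb' absX.
have hp1 : c ^+ p = c ^+ p.-1 * c by rewrite -exprSr prednK.
have hcp : 0 < c ^+ p.-1 by exact: exprn_gt0.
have hcpp : 0 <= c ^+ p by apply: exprn_ge0; exact: ltW.
have hbound : forall nu, nu != mi_zero n -> W r vbar w nu <= rho * c.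
  suff H : forall N nu, (mi_deg nu < N)%N -> nu != mi_zero n -> W r vbar w nu <= rho * c.
    by move=> nu; apply: H (ltnSn _).
  elim=> [|N IH] nu hd hnu; first by [].
  have hyp1 : forall mu, mi_le mu nu -> mu != mi_zero n -> mu != nu ->
     W r vbar w mu <= rho * vbar b' /\ ((0 < mi_deg mu)%N -> W r vbar w mu <= rho * vbar b').
    move=> mu hle hmu hne; have hlt := mi_lt_deg hle hne.
    have hmN : (mi_deg mu < N)%N by apply: leq_trans hlt _; rewrite -ltnS.
    by split; [exact: IH | move=> _; exact: IH].
  have hyp2 : (p * 0 < mi_deg nu)%N by rewrite muln0 lt0n mi_deg0.
  have H := key_step hr hvbar (beta:=b') (rho:=rho) (B:=rho) (D:=0) hr0 hr0 (ltW hr1)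
    (y:=w) (g:=g) (nu:=nu) hp0 hvbp hw0 hnu (hwp nu) hyp1 hyp2. rewrite -(ler_pM2r hcp); apply: le_trans H _; rewrite ge_max; apply/andP; split.
    by rewrite -mulrA (mulrC c) -hp1 -hvb; exact: hbnd.
  have E1 : rho * c * c ^+ p.-1 = rho * c ^+ p by rewrite hp1; ring.
  rewrite -/c E1 -mulrA; apply: ler_wpM2l => //.
  by rewrite -{2}[c ^+ p]mul1r; apply: ler_wpM2r => //; exact: ltW.
have hdecw : forall eps, 0 < eps -> exists N : nat, forall nu, (N < mi_deg nu)%N ->
    W r vbar w nu < eps.
  move=> eps he.
  set d := eps / (2 * c).
  have hd : 0 < d by apply: divr_gt0 => //; apply: mulr_gt0.
  have [Ng hNg] := hdec (d * c ^+ p) (mulr_gt0 hd (exprn_gt0 _ hc)).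
  have hcc : forall X, X * c * c ^+ p.-1 = X * c ^+ p by move=> X; rewrite hp1; ring.
  have claim : forall j : nat, exists Dj : nat, forall nu, (Dj < mi_deg nu)%N ->
      W r vbar w nu <= Num.max d (rho ^+ j.+1) * c.
    elim=> [|j [Dj hDj]].
      exists 0%N => nu hdg; have hnu : nu != mi_zero n by rewrite -mi_deg0 -lt0n.
      apply: le_trans (hbound nu hnu) _; apply: ler_wpM2r; first exact: ltW.
      by rewrite expr1 le_max lexx orbT.
    exists (maxn Ng (p * Dj)) => nu hdg.
    have hnu : nu != mi_zero n by rewrite -mi_deg0 -lt0n; apply: leq_ltn_trans hdg.
    set Bj := Num.max d (rho ^+ j.+1).
    have hBj0 : 0 <= Bj by rewrite le_max ltW.
    have hyp1 : forall mu, mi_le mu nu -> mu != mi_zero n -> mu != nu ->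
       W r vbar w mu <= rho * vbar b' /\ ((Dj < mi_deg mu)%N -> W r vbar w mu <= Bj * vbar b').
      move=> mu hle hmu hne; split; first exact: hbound.
      by move=> hmu'; exact: hDj.
    have hyp2 : (p * Dj < mi_deg nu)%N by apply: leq_ltn_trans hdg; exact: leq_maxr.
    have H := key_step hr hvbar (beta:=b') (rho:=rho) (B:=Bj) (D:=Dj) hBj0 hr0 (ltW hr1)
      (y:=w) (g:=g) (nu:=nu) hp0 hvbp hw0 hnu (hwp nu) hyp1 hyp2. rewrite -(ler_pM2r hcp); apply: le_trans H _; rewrite ge_max; apply/andP; split.
      rewrite hcc.
      apply: ltW; apply: lt_le_trans (hNg nu (leq_ltn_trans (leq_maxl _ _) hdg)) _.
      by apply: ler_wpM2r => //; rewrite le_max lexx.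
    rewrite -/c hcc; apply: ler_wpM2r => //.
    rewrite /Bj maxEle; case: ifP => h.
      by rewrite -exprS le_max lexx orbT.
    rewrite le_max; apply/orP; left.
    by rewrite -{2}[d]mul1r; apply: ler_wpM2r; [exact: ltW | exact: ltW].
  have [j hj] := pow_small hr0 hr1 hd.
  have [Dj hDj] := claim j.
  exists Dj => nu hdg; apply: le_lt_trans (hDj nu hdg) _.
  have -> : Num.max d (rho ^+ j.+1) = d.
    by rewrite maxEle; case: ifP => // h; apply/eqP; rewrite eq_le h ltW.
  have hc0 : c != 0 by exact: lt0r_neq0.
  have -> : d * c = eps / 2 by rewrite /d; field.
  lra.
exists w; split; last exact: hwp.
split.
- by rewrite hw0.
- by rewrite hw0.
- exact: hdecw.
- by rewrite hw0.
Qed.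

End Main.

Unset Implicit Arguments. Set Strict Implicit. Set Printing Implicit Defensive.


Theorem lemma2p10 (R : realType) (k : fieldType) (v : k -> R)
  (hv : nonarch_abs v) (hcomp : complete_abs v) (hnt : nontrivial_abs v)
  (p : nat) (hp : prime p) (hvp : v (p%:R) = 1)
  (n : nat) (r : 'I_n -> R) (hr : forall i, 0 < r i)
  (f : pseries k n) (hf : in_tate v r f)
  (kbar : closedFieldType) (iota : {rmorphism k -> kbar})
  (halg : forall x : kbar, exists q : {poly k}, q != 0 /\ root (map_poly iota q) x)
  (vbar : kbar -> R) (hvbar : nonarch_abs vbar)
  (hext : forall x : k, vbar (iota x) = v x) :
  forall a : kbar, tate_norm v r f < vbar a ->
    has_compatible_proots v r iota p (tensor_add_const iota f a).
Proof.
move=> a ha.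
set M := tate_norm v r f in ha.
have hsup : has_sup [set x : R | exists nu, x = v (f nu) * rpow r nu].
  split; first by exists (v (f (mi_zero n)) * rpow r (mi_zero n)); exists (mi_zero n).
  have [N hN] := hf 1 ltr01.
  pose cv (mu : {ffun 'I_n -> 'I_N.+1}) : multi_index n := [ffun i => nat_of_ord (mu i)].
  pose U := 1 + \sum_(mu : {ffun 'I_n -> 'I_N.+1}) v (f (cv mu)) * rpow r (cv mu).
  have hterm : forall mu, 0 <= v (f (cv mu)) * rpow r (cv mu).
    by move=> mu; apply: mulr_ge0; [exact: abs_ge0 | exact: rpow_ge0].
  exists U => x [nu ->]; case: (ltnP N (mi_deg nu)) => h.
    apply: ltW; apply: lt_le_trans (hN nu h) _.
    have : 0 <= \sum_(mu : {ffun 'I_n -> 'I_N.+1}) v (f (cv mu)) * rpow r (cv mu).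
      by apply: sumr_ge0 => mu _.
    rewrite /U; lra.
  pose mu0 : {ffun 'I_n -> 'I_N.+1} := [ffun i => inord (nu i)].
  have hmu0 : cv mu0 = nu.
    apply/ffunP => i; rewrite !ffunE inordK // ltnS.
    exact: leq_trans (le_deg nu i) h.
  have h0 : 0 <= \sum_(mu | mu != mu0) v (f (cv mu)) * rpow r (cv mu).
    by apply: sumr_ge0 => mu _.
  rewrite /U (bigD1 mu0) //= hmu0; lra.
have hM : forall nu, v (f nu) * rpow r nu <= M.
  by move=> nu; apply: (sup_upper_bound hsup); exists nu.
have hM0 : 0 <= M.
  apply: le_trans (hM (mi_zero n)).
  by apply: mulr_ge0; [exact: abs_ge0 | exact: rpow_ge0].
have hva : 0 < vbar a by exact: le_lt_trans ha.
set rho := M / vbar a.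
have hr0 : 0 <= rho by apply: divr_ge0 => //; exact: ltW.
have hr1 : rho < 1 by rewrite /rho ltr_pdivrMr // mul1r.
pose g0 := tensor_add_const iota f a.
have hg00 : g0 (mi_zero n) = a + iota (f (mi_zero n)).
  by rewrite /g0 /tensor_add_const eqxx addrC.
have hvf0 : vbar (iota (f (mi_zero n))) < vbar a.
  rewrite hext; apply: le_lt_trans ha.
  by have := hM (mi_zero n); rewrite rpow0 mulr1.
have hvg0 : vbar (g0 (mi_zero n)) = vbar a by rewrite hg00 (abs_dom hvbar hvf0).
have hgnu : forall nu, nu != mi_zero n -> g0 nu = iota (f nu).
  by move=> nu hnu; rewrite /g0 /tensor_add_const (negbTE hnu) addr0.
have hInv : Inv r iota vbar rho g0.
  split.
  - by rewrite -(abs_eq0 hvbar) hvg0 lt0r_neq0.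
  - move=> nu hnu; rewrite hvg0 /rho mulrAC -mulrA mulfV ?lt0r_neq0 // mulr1.
    by rewrite /W hgnu // hext.
  - move=> eps he; have [N hN] := hf eps he; exists N => nu hnu.
    have hnu0 : nu != mi_zero n by rewrite -mi_deg0 -lt0n; apply: leq_ltn_trans hnu.
    by rewrite /W hgnu // hext; exact: hN.
  - move=> nu.
    have -> : g0 nu = iota (f nu) + (if nu == mi_zero n then a else 0) by [].
    apply: inS_add; first exact: inS_const.
    case: ifP => _; last exact: inS_0.
    have -> : a = g0 (mi_zero n) - iota (f (mi_zero n)) by rewrite hg00 addrK.
    by apply: inS_add; [exact: inS_b | apply: inS_opp; exact: inS_const].
have hstep : forall gs : {g | Inv r iota vbar rho g},
    exists ws : {w | Inv r iota vbar rho w}, forall nu, ps_exp (sval ws) p nu = sval gs nu.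
  move=> [g hg]; have [w [hw hwp]] := step hp hvp hr halg hvbar hext hr0 hr1 hg.
  by exists (exist _ w hw).
have [F hF] := choice hstep.
pose s e := sval (iter e F (exist _ g0 hInv)).
exists s; split; [|split].
- move=> e; have := svalP (iter e F (exist _ g0 hInv)); rewrite -/(s e).
  case=> _ _ hdec hS.
  apply: (tensor_of_S hv hvbar hcomp hext hr (halg _) hS).
  exact: hdec.
- by [].
- by move=> e nu; rewrite /s iterS; exact: hF.
Qed.
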